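(* Let $\mathcal X\in\mathbb{IR}^n$ be a box and let $g:\mathcal X\to\mathbb{R}$ be continuous with a constant $L_g<\infty$ such that $\operatorname{wid}(g(\bm X))\le L_g\operatorname{diam}(\bm X)$ for every box $\bm X\subseteq\mathcal X$. Let $(g^{\rm u},g^{\rm o})_{\bm X\subseteq\mathcal X}$ be a scheme of superposition relaxations of $g$ with continuous summands having pointwise convergence of order $\alpha_g\ge1$. Then there exists $L'_g<\infty$ such that for every box $\bm X\subseteq\mathcal X$ and every $i=1,\dots,n$, $$\operatorname{wid}(g^{\rm u}_i(X_i))\le L'_g\operatorname{diam}(\bm X)\quad\text{and}\quad\operatorname{wid}(g^{\rm o}_i(X_i))\le L'_g\operatorname{diam}(\bm X).$$
   Context: $\mathbb{IR}^n$ is the set of boxes $\bm X=X_1\times\cdots\times X_n$ of compact intervals; $\operatorname{wid}(X_i)=\overline X_i-\underline X_i$, $\operatorname{diam}(\bm X)=\sqrt{\sum_i\operatorname{wid}(X_i)^2}$. For a function $u$ on a set $S$, $\operatorname{wid}(u(S))=\max_S u-\min_S u$. A superposition relaxation of $g$ on $\bm X$ is a pair of separable functions $g^{\rm u}(\bm x)=\sum_i g^{\rm u}_i(x_i)$, $g^{\rm o}(\bm x)=\sum_i g^{\rm o}_i(x_i)$ ($g^{\rm u}_i,g^{\rm o}_i:X_i\to\mathbb{R}$) with $g^{\rm u}\le g\le g^{\rm o}$ on $\bm X$. A scheme $(g^{\rm u},g^{\rm o})_{\bm X\subseteq\mathcal X}$ assigns to every box $\bm X\subseteq\mathcal X$ a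 superposition relaxation of $g$ on $\bm X$; it has pointwise convergence of order $\alpha>0$ if there is $\tau<\infty$ such that for every box $\bm X\subseteq\mathcal X$, $\sup_{\bm X}|g-g^{\rm u}|\le\tau\operatorname{diam}(\bm X)^\alpha$ and $\sup_{\bm X}|g-g^{\rm o}|\le\tau\operatorname{diam}(\bm X)^\alpha$. *)

(* Defs.v *)
From HB Require Import structures.
From mathcomp Require Import all_boot all_order all_algebra.
From mathcomp Require Import all_classical all_reals all_analysis.
Set Implicit Arguments. Unset Strict Implicit. Unset Printing Implicit Defensive.
Import Order.TTheory GRing.Theory Num.Theory.
Import numFieldNormedType.Exports.
Local Open Scope classical_set_scope.
Local Open Scope ring_scope.

Record box (R : realType) (n : nat) := Box {
  blo : 'I_n -> R;
  bhi : 'I_n -> R;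
  ble : forall i, blo i <= bhi i }.

(* Points of R^n are row vectors 'rV[R]_n; coordinate i of x is x ord0 i. *)
Definition box_set (R : realType) (n : nat) (B : box R n) : set 'rV[R]_n :=
  [set x | forall i : 'I_n, blo B i <= x ord0 i <= bhi B i].

Definition box_comp (R : realType) (n : nat) (B : box R n) (i : 'I_n) : set R :=
  `[blo B i, bhi B i].

Definition subbox (R : realType) (n : nat) (B B' : box R n) : Prop :=
  forall i : 'I_n, blo B' i <= blo B i /\ bhi B i <= bhi B' i.

Definition wid (R : realType) (n : nat) (B : box R n) (i : 'I_n) : R :=
  bhi B i - blo B i.

Definition diam (R : realType) (n : nat) (B : box R n) : R :=
  Num.sqrt (\sum_(i < n) (wid B i) ^+ 2).

Definition wid_img (R : realType) (T : Type) (u : T -> R) (S : set T) : R :=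
  sup (u @` S) - inf (u @` S).

Definition sepsum (R : realType) (n : nat) (f : 'I_n -> R -> R)
  (x : 'rV[R]_n) : R := \sum_(i < n) f i (x ord0 i).

Definition superposition_relaxation (R : realType) (n : nat)
  (g : 'rV[R]_n -> R) (B : box R n) (gu go : 'I_n -> R -> R) : Prop :=
  forall x, box_set B x -> sepsum gu x <= g x <= sepsum go x.

Definition relaxation_scheme (R : realType) (n : nat) (g : 'rV[R]_n -> R)
  (XX : box R n) (gu go : box R n -> 'I_n -> R -> R) : Prop :=
  forall B, subbox B XX -> superposition_relaxation g B (gu B) (go B).

Definition pointwise_convergence_order (R : realType) (n : nat)
  (g : 'rV[R]_n -> R) (XX : box R n) (gu go : box R n -> 'I_n -> R -> R)
  (alpha : R) : Prop :=
  exists tau : R, forall B, subbox B XX ->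
    (forall x, box_set B x -> `|g x - sepsum (gu B) x| <= tau * (diam B) `^ alpha) /\
    (forall x, box_set B x -> `|g x - sepsum (go B) x| <= tau * (diam B) `^ alpha).

(* Main.v *)
Require Import Defs.
From HB Require Import structures.
From mathcomp Require Import all_boot all_order all_algebra.
From mathcomp Require Import all_classical all_reals all_analysis.
From mathcomp Require Import lra.
Import Order.TTheory GRing.Theory Num.Theory.
Import numFieldNormedType.Exports.
Local Open Scope classical_set_scope.
Local Open Scope ring_scope.

Section Aux.
Variable R : realType.

Lemma wid_img_le (f : R -> R) (S : set R) c : S !=set0 ->
  (forall s t, S s -> S t -> f s - f t <= c) -> wid_img f S <= c.
Proof.
move=> [s0 Ss0] H.
have ne : f @` S !=set0 by exists (f s0), s0.
have supl : forall t, S t -> sup (f @` S) <= f t + c.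
  move=> t St; apply: ge_sup => // _ [s Ss <-].
  have := H s t Ss St; lra.
have : sup (f @` S) - c <= inf (f @` S).
  apply: lb_le_inf => // _ [t St <-]; have := supl t St; lra.
rewrite /wid_img; lra.
Qed.

Lemma sepsum_diff n (f : 'I_n -> R -> R) i (x y : 'rV[R]_n) :
  (forall j, j != i -> x ord0 j = y ord0 j) ->
  sepsum f x - sepsum f y = f i (x ord0 i) - f i (y ord0 i).
Proof.
move=> H; rewrite /sepsum (bigD1 i) //= [X in _ - X](bigD1 i) //=.
have -> : \sum_(j < n | j != i) f j (x ord0 j) = \sum_(j < n | j != i) f j (y ord0 j).
  by apply: eq_bigr => j /H ->.
lra.
Qed.

Lemma diam_ge0 n (B : box R n) : 0 <= diam B.
Proof. exact: sqrtr_ge0. Qed.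

Lemma diam_le n (B B' : box R n) : subbox B B' -> diam B <= diam B'.
Proof.
move=> H; rewrite /diam ler_sqrt; last by apply: sumr_ge0 => j _; exact: sqr_ge0.
apply: ler_sum => j _.
have [h1 h2] := H j; have w0 : 0 <= wid B j by rewrite /wid subr_ge0 ble.
rewrite ler_sqr ?nnegrE //; first by rewrite /wid; lra.
by rewrite /wid; have := ble B' j; lra.
Qed.

Lemma powR_lin (d D alpha : R) : 0 <= d -> d <= D -> 1 <= alpha ->
  d `^ alpha <= d * D `^ (alpha - 1).
Proof.
move=> d0 dD a1.
have [->|dn0] := eqVneq d 0.
  by rewrite powR0 ?mul0r //; apply/negP => /eqP a0; lra.
have E : d `^ (1 + (alpha - 1)) = d * d `^ (alpha - 1).
  by rewrite (@powRD _ d 1 (alpha - 1)) ?powRr1 // dn0 implybT.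
rewrite addrC subrK in E; rewrite E.
apply: ler_wpM2l => //; apply: ge0_ler_powR; rewrite ?nnegrE //; lra.
Qed.

Lemma fin_arith (gs gt us ut e L K d T : R) :
  us - ut = e -> gs - gt <= L * d -> - T <= gs - us <= T -> - T <= gt - ut <= T ->
  T <= K * d -> e <= (L + 2 * K) * d.
Proof. move=> h1 h2 /andP[h3 h4] /andP[h5 h6] h7; lra. Qed.

End Aux.

Theorem lemma2 (R : realType) (n : nat) (XX : box R n) (g : 'rV[R]_n -> R)
  (gu go : box R n -> 'I_n -> R -> R) (alpha : R) :
  {within box_set XX, continuous g} ->
  (exists Lg : R, forall B, subbox B XX -> wid_img g (box_set B) <= Lg * diam B) ->
  relaxation_scheme g XX gu go ->
  (forall B, subbox B XX -> forall i : 'I_n,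
     {within (box_comp B i), continuous (gu B i)} /\ {within (box_comp B i), continuous (go B i)}) ->
  1 <= alpha ->
  pointwise_convergence_order g XX gu go alpha ->
  exists L' : R, forall B, subbox B XX -> forall i : 'I_n,
    wid_img (gu B i) (box_comp B i) <= L' * diam B /\
    wid_img (go B i) (box_comp B i) <= L' * diam B.
Proof.
move=> _ [Lg HLg] Hrel Hcont a1 [tau Htau].
pose K := `|tau| * diam XX `^ (alpha - 1).
exists (Lg + 2 * K) => B sB i.
set d := diam B.
have d0 : 0 <= d by exact: diam_ge0.
have tauK : tau * d `^ alpha <= K * d.
  apply: (le_trans (y := `|tau| * d `^ alpha)).
    by apply: ler_wpM2r; [exact: powR_ge0 | exact: ler_norm].
  rewrite /K -mulrA [_ `^ _ * d]mulrC; apply: ler_wpM2l => //.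
  by apply: powR_lin => //; exact: diam_le.
have [cu Hcu] : {c : 'I_n -> R & forall j, forall t, t \in `[blo B j, bhi B j] ->
      gu B j (c j) <= gu B j t}.
  apply: (@choice _ _ (fun j c => forall t, t \in `[blo B j, bhi B j] -> gu B j c <= gu B j t)) => j; have [c _ Hc] := EVT_min (ble B j) (proj1 (Hcont B sB j)).
  by exists c.
have [co Hco] : {c : 'I_n -> R & forall j, forall t, t \in `[blo B j, bhi B j] ->
      go B j t <= go B j (c j)}.
  apply: (@choice _ _ (fun j c => forall t, t \in `[blo B j, bhi B j] -> go B j t <= go B j c)) => j; have [c _ Hc] := EVT_max (ble B j) (proj2 (Hcont B sB j)).
  by exists c.
have inB : forall x, box_set B x -> forall j, x ord0 j \in `[blo B j, bhi B j].
  by move=> x Bx j; rewrite in_itv /=; exact: Bx.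
have hub : has_ubound (g @` box_set B).
  exists (\sum_j go B j (co j)) => _ [x Bx <-].
  have /andP[_ h] := Hrel B sB x Bx.
  apply: (le_trans h); apply: ler_sum => j _; exact: Hco (inB x Bx j).
have hlb : has_lbound (g @` box_set B).
  exists (\sum_j gu B j (cu j)) => _ [x Bx <-].
  have /andP[h _] := Hrel B sB x Bx.
  apply: le_trans h; apply: ler_sum => j _; exact: Hcu (inB x Bx j).
pose pt (s : R) : 'rV[R]_n := \row_j (if j == i then s else blo B j).
have ptB : forall s, box_comp B i s -> box_set B (pt s).
  move=> s; rewrite /box_comp /= in_itv /= => hs j; rewrite /pt mxE.
  by case: eqP => [->|_] //; rewrite lexx ble.
have ptdiff : forall (f : 'I_n -> R -> R) s t,
    sepsum f (pt s) - sepsum f (pt t) = f i s - f i t.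
  move=> f s t; rewrite (@sepsum_diff _ _ f i); first by rewrite !mxE eqxx.
  by move=> j /negbTE hj; rewrite !mxE hj.
have gdiff : forall s t, box_comp B i s -> box_comp B i t ->
    g (pt s) - g (pt t) <= Lg * d.
  move=> s t hs ht; apply: le_trans (HLg B sB).
  have h1 : g (pt s) <= sup (g @` box_set B).
    by apply: ub_le_sup => //; exists (pt s) => //; exact: ptB.
  have h2 : inf (g @` box_set B) <= g (pt t).
    by apply: ge_inf => //; exists (pt t) => //; exact: ptB.
  rewrite /wid_img; move: h1 h2; clear; move=> h1 h2; lra.
have ne : box_comp B i !=set0.
  exists (blo B i); rewrite /box_comp /= in_itv /= lexx ble //.
have [Hu Ho] := Htau B sB.
split; apply: wid_img_le => // s t hs ht.
- apply: fin_arith.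
  + exact: ptdiff (gu B) s t.
  + exact: gdiff s t hs ht.
  + rewrite -ler_norml; exact: Hu (ptB s hs).
  + rewrite -ler_norml; exact: Hu (ptB t ht).
  + exact: tauK.
- apply: fin_arith.
  + exact: ptdiff (go B) s t.
  + exact: gdiff s t hs ht.
  + rewrite -ler_norml; exact: Ho (ptB s hs).
  + rewrite -ler_norml; exact: Ho (ptB t ht).
  + exact: tauK.
Qed.
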